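(* Let $G$ be the cube graph $Q_3$, let $P$ be a pot realizing $G$ according to Scenario 3, and let $\lambda$ be an assembly design of $G$ with $P_\lambda(G)\subseteq P$. If $t\in P$ and $\lambda(v_i)=\lambda(v_j)=t$ for two distinct vertices $v_i\neq v_j$, then $t=\{a,b,c\}$ where the three cohesive-end types $a,b,c$ belong to three pairwise distinct bond-edge types.
   Context: Fix a set $\Sigma$ of symbols (bond-edge types) and a disjoint copy $\hat\Sigma=\{\hat a:a\in\Sigma\}$ with $\hat{\hat a}=a$; elements of $\Sigma\cup\hat\Sigma$ are cohesive-end types, and $x$ and $\hat x$ belong to the same bond-edge type. A tile is a finite multiset of cohesive-end types. A pot is a finite set $P$ of tiles such that whenever $x$ occurs in a tile of $P$, $\hat x$ occurs in some tile of $P$. Graphs are finite, loops and multiple edges allowed. An assembly design of a graph $H$ is a labeling $\lambda$ of the half-edges of $H$ by cohesive-end types such that the two half-edges of each edge receive complementary labels $x,\hat x$; $\lambda(v)=t_v$ denotes the multiset of labels of half-edges at vertex $v$, and $P_\lambda(H)=\{t_v: v\in V(H)\}$. $P$ realizes $H$ ($H\in\mathcal{O}(P)$) if some assembly design $\lambda$ has $P_\lambda(H)\subseteq P$. $P$ realizes $G$ according to Scenario 3 if $G\in\mathcal{O}(P)$, every $H\in\mathcal{O}(P)$ has $\#V(H)\ge\#V(G)$, and every $H\in\mathcal{O}(P)$ with $\#V(H)=\#V(G)$ is isomorphic to $G$. *)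

(* Defs.v *)
From mathcomp Require Import all_boot.
Set Implicit Arguments.
Unset Strict Implicit.
Unset Printing Implicit Defensive.

(* Cohesive-end types over a symbol type S : (a, false) is the symbol a,
   (a, true) is its hatted copy \hat a.  The bond-edge type of x is x.1. *)
Definition cet (S : eqType) := (S * bool)%type.
Definition hat (S : eqType) (x : cet S) : cet S := (x.1, ~~ x.2).
Definition bond_type (S : eqType) (x : cet S) : S := x.1.

(* A tile is a finite multiset of cohesive-end types, represented by a
   sequence considered up to permutation (perm_eq). *)
Definition tile (S : eqType) := seq (cet S).
Definition tile_eq (S : eqType) (t u : tile S) : bool := perm_eq t u.

Definition in_tiles (S : eqType) (t : tile S) (P : seq (tile S)) : bool :=
  has (tile_eq t) P.

Definition is_pot (S : eqType) (P : seq (tile S)) : Prop :=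
  forall t x, t \in P -> x \in t -> exists2 u, u \in P & hat x \in u.

(* Finite graphs with loops and multiple edges: each edge e has two
   half-edges (e,false) at src e and (e,true) at tgt e. *)
Record graph := Graph {
  gV : finType;
  gE : finType;
  gsrc : gE -> gV;
  gtgt : gE -> gV }.

Definition hend (H : graph) (h : gE H * bool) : gV H :=
  if h.2 then gtgt h.1 else gsrc h.1.

Definition assembly_design (S : eqType) (H : graph)
  (lam : gE H * bool -> cet S) : Prop :=
  forall e : gE H, lam (e, true) = hat (lam (e, false)).

Definition tile_at (S : eqType) (H : graph) (lam : gE H * bool -> cet S)
  (v : gV H) : tile S :=
  [seq lam h | h <- enum {: gE H * bool} & hend h == v].

Definition tiles_in (S : eqType) (H : graph) (lam : gE H * bool -> cet S)
  (P : seq (tile S)) : Prop :=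
  forall v : gV H, in_tiles (tile_at lam v) P.

Definition realizes (S : eqType) (P : seq (tile S)) (H : graph) : Prop :=
  exists lam : gE H * bool -> cet S, assembly_design lam /\ tiles_in lam P.

Definition graph_iso (H K : graph) : Prop :=
  exists (f : gV H -> gV K) (g : gE H -> gE K),
    bijective f /\ bijective g /\
    forall e, (gsrc (g e) = f (gsrc e) /\ gtgt (g e) = f (gtgt e)) \/
              (gsrc (g e) = f (gtgt e) /\ gtgt (g e) = f (gsrc e)).

(* Scenario 3 (graphs in O(P) are taken nonempty). *)
Definition scenario3 (S : eqType) (P : seq (tile S)) (G : graph) : Prop :=
  realizes P G /\
  (forall H : graph, 0 < #|gV H| -> realizes P H -> #|gV G| <= #|gV H|) /\
  (forall H : graph, 0 < #|gV H| -> realizes P H -> #|gV H| = #|gV G| ->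
     graph_iso H G).

(* The cube graph Q_3: vertices bool^3; edge (i, (x, y)) joins the two
   vertices whose coordinates other than i are (x, y) and whose i-th
   coordinate is false / true respectively. *)
Definition cube_vertex (i : 'I_3) (p : bool * bool) (b : bool)
  : bool * bool * bool :=
  let (x, y) := p in
  if val i == 0 then (b, x, y) else if val i == 1 then (x, b, y) else (x, y, b).

Definition Q3 : graph :=
  @Graph (bool * bool * bool)%type ('I_3 * (bool * bool))%type
    (fun e => cube_vertex e.1 e.2 false) (fun e => cube_vertex e.1 e.2 true).

(* Main.v *)
Require Import Defs.
From mathcomp Require Import all_boot.
Set Implicit Arguments.
Unset Strict Implicit.
Unset Printing Implicit Defensive.

Definition V := (bool * bool * bool)%type.
Definition E := ('I_3 * (bool * bool))%type.
Definition HE := (E * bool)%type.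
Definition beq (a b : bool) := if a then b else ~~ b.
Definition eqVf (u v : V) :=
  match u, v with (a, b, c), (a', b', c') => [&& beq a a', beq b b' & beq c c'] end.
Definition eqEf (e e' : E) :=
  [&& eqn (nat_of_ord e.1) (nat_of_ord e'.1), beq e.2.1 e'.2.1 & beq e.2.2 e'.2.2].
Definition eqHf (h h' : HE) := eqEf h.1 h'.1 && beq h.2 h'.2.
Definition cvF (i : 'I_3) (p : bool * bool) (b : bool) : V :=
  let (x, y) := p in match nat_of_ord i with 0 => (b, x, y) | 1 => (x, b, y) | _ => (x, y, b) end.
Definition hendF (h : HE) : V := cvF h.1.1 h.1.2 h.2.
Definition bl := [:: true; false].
Definition Pl : seq (bool * bool) := [seq (x, y) | x <- bl, y <- bl].
Definition Ol : seq 'I_3 := [:: @Ordinal 3 0 isT; @Ordinal 3 1 isT; @Ordinal 3 2 isT].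
Definition Vl : seq V := [seq (p, c) | p <- Pl, c <- bl].
Definition El : seq E := [seq (i, p) | i <- Ol, p <- Pl].
Definition HEl : seq HE := [seq (e, b) | e <- El, b <- bl].
Definition hsL (v : V) := [seq h <- HEl | eqVf (hendF h) v].
Definition partner (h : HE) : HE := (h.1, ~~ h.2).
Definition sw (h k x : HE) := if eqHf x h then k else if eqHf x k then h else x.
Definition samep (a b : V * V) :=
  (eqVf a.1 b.1 && eqVf a.2 b.2) || (eqVf a.1 b.2 && eqVf a.2 b.1).
Definition adjL (s t : E -> V) (u v : V) := has (fun e => samep (s e, t e) (u, v)) El.
Definition badG (s t : E -> V) (A : V -> V -> bool) :=
  [|| has (fun e => eqVf (s e) (t e)) El,
      has (fun e => has (fun e' => ~~ eqEf e e' && samep (s e, t e) (s e', t e')) El) El |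
      has (fun e => has (fun w => [&& ~~ eqVf w (s e), ~~ eqVf w (t e), A (s e) w & A (t e) w]) Vl) El].
Definition badL (s t : E -> V) := badG s t (adjL s t).
Definition swS (h k : HE) (e : E) := hendF (sw h k (e, false)).
Definition swT (h k : HE) (e : E) := hendF (sw h k (e, true)).
Definition code (e : E) : nat := nat_of_ord e.1 * 4 + ((if e.2.1 then 0 else 2) + (if e.2.2 then 0 else 1)).
Definition vcode (v : V) : nat := (if v.1.1 then 0 else 4) + (if v.1.2 then 0 else 2) + (if v.2 then 0 else 1).
Definition v0 : V := (true, true, true).
Definition badF (s t : E -> V) :=
  let tab := [seq (s e, t e) | e <- El] in
  let s' := fun e => (nth (v0, v0) tab (code e)).1 in
  let t' := fun e => (nth (v0, v0) tab (code e)).2 in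
  let atab := [seq adjL s' t' u v | u <- Vl, v <- Vl] in
  badG s' t' (fun u v => nth false atab (vcode u * 8 + vcode v)).
Definition badS (h k : HE) := badF (swS h k) (swT h k).
Definition qs (e : E) : V := cvF e.1 e.2 false.
Definition qt (e : E) : V := cvF e.1 e.2 true.
Fixpoint pairsOf (T : Type) (s : seq T) : seq (T * T) :=
  if s is x :: r then [seq (x, y) | y <- r] ++ pairsOf r else [::].
Definition corev (vi vj : V) := ~~ eqVf vi vj ==> all (fun h => ~~ eqVf (hendF (partner h)) vj) (hsL vi) ==>
  all (fun p => all (fun q => [|| badS p.1 q.1, badS p.1 q.2, badS p.2 q.1 | badS p.2 q.2])
     (pairsOf (hsL vj))) (pairsOf (hsL vi)).
Definition coreb := all (fun vi => all (fun vj => corev vi vj) Vl) Vl.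
Definition loopb := all (fun vi => all (fun h1 => all (fun h2 => ~~ eqHf h1 h2 ==> badS (partner h1) h2) (hsL vi)) (hsL vi)) Vl.
Definition sizeb := all (fun v => size (hsL v) == 3) Vl.
Definition q1b := all (fun e => ~~ eqVf (qs e) (qt e)) El.
Definition q2b := all (fun e => all (fun e' => samep (qs e, qt e) (qs e', qt e') ==> eqEf e e') El) El.
Definition q3b := all (fun e => all (fun w => ~~ eqVf w (qs e) ==> ~~ eqVf w (qt e) ==> ~~ (adjL qs qt (qs e) w && adjL qs qt (qt e) w)) Vl) El.

Lemma loopT : loopb. Proof. vm_compute. reflexivity. Qed.
Lemma coreT : coreb. Proof. vm_compute. reflexivity. Qed.
Lemma sizeT : sizeb. Proof. vm_compute. reflexivity. Qed.
Lemma q1T : q1b. Proof. vm_compute. reflexivity. Qed.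
Lemma q2T : q2b. Proof. vm_compute. reflexivity. Qed.
Lemma q3T : q3b. Proof. vm_compute. reflexivity. Qed.
Lemma heT : uniq HEl. Proof. vm_compute. reflexivity. Qed.

From Stdlib Require Import FunctionalExtensionality.

Lemma beqE (a b : bool) : beq a b = (a == b).
Proof. by case: a; case: b. Qed.

Lemma eqVfE (u v : V) : eqVf u v = (u == v).
Proof.
case: u => [[a b] c]; case: v => [[a' b'] c'].
by rewrite /eqVf !beqE !xpair_eqE andbA.
Qed.

Lemma eqEfE (e e' : E) : eqEf e e' = (e == e').
Proof.
case: e => [i [a b]]; case: e' => [i' [a' b']].
by rewrite /eqEf /= !beqE !xpair_eqE.
Qed.

Lemma eqHfE (h h' : HE) : eqHf h h' = (h == h').
Proof.
case: h => [e b]; case: h' => [e' b'].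
by rewrite /eqHf /= eqEfE beqE xpair_eqE.
Qed.

Lemma eqVfP (u v : V) : reflect (u = v) (eqVf u v).
Proof. by rewrite eqVfE; apply: eqP. Qed.

Lemma cvE i p b : cube_vertex i p b = cvF i p b.
Proof. by case: i => [[|[|m]] Hi]; case: p. Qed.

Lemma hendE (h : HE) : @hend Q3 h = hendF h.
Proof. by case: h => [[i p] []]; rewrite /hend /= cvE. Qed.

Lemma memOl (i : 'I_3) : i \in Ol.
Proof. rewrite !inE -!val_eqE /=; by case: i => [[|[|[|m]]] Hi]. Qed.

Lemma memPl (p : bool * bool) : p \in Pl.
Proof. by case: p => [[] []]. Qed.

Lemma memEl (e : E) : e \in El.
Proof. case: e => i p; exact: allpairs_f (memOl i) (memPl p). Qed.

Lemma memVl (v : V) : v \in Vl.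
Proof. case: v => p c; apply: allpairs_f (memPl p) _; by case: c. Qed.

Lemma memHEl (h : HE) : h \in HEl.
Proof. case: h => e b; apply: allpairs_f (memEl e) _; by case: b. Qed.

Lemma samepP (a b : V * V) : reflect (a = b \/ a = (b.2, b.1)) (samep a b).
Proof.
case: a => [a1 a2]; case: b => [b1 b2]; rewrite /samep /=.
apply: (iffP orP).
- by case=> /andP[/eqVfP -> /eqVfP ->]; auto.
- by case=> [[-> ->]|[-> ->]]; [left|right]; apply/andP; split; apply/eqVfP.
Qed.

Lemma samep_trans a b c : samep a b -> samep b c -> samep a c.
Proof.
case: a => a1 a2; case: b => b1 b2; case: c => c1 c2.
move=> /samepP /= [[-> ->]|[-> ->]] /samepP /= [[-> ->]|[-> ->]]; apply/samepP; auto.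
Qed.

Lemma samep_sym a b : samep a b -> samep b a.
Proof.
case: a => a1 a2; case: b => b1 b2.
move=> /samepP /= [[-> ->]|[-> ->]]; apply/samepP; auto.
Qed.

Lemma samep_map (f : V -> V) u v u' v' : samep (u, v) (u', v') -> samep (f u, f v) (f u', f v').
Proof. move=> /samepP /= [[-> ->]|[-> ->]]; apply/samepP; auto. Qed.

Lemma codeP (s t : E -> V) e : nth (v0, v0) [seq (s e, t e) | e <- El] (code e) = (s e, t e).
Proof.
have He : nth e El (code e) = e.
  apply/eqP; rewrite -eqEfE.
  by case: e => [[[|[|[|m]]] Hm] [[] []]].
have Hs : code e < size El.
  by clear He; case: e => [[[|[|[|m]]] Hm] [[] []]].
by rewrite (nth_map e) // He.
Qed.

Lemma vcodeP (A : V -> V -> bool) u v :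
  nth false [seq A u0 v0 | u0 <- Vl, v0 <- Vl] (vcode u * 8 + vcode v) = A u v.
Proof. by case: u => [[[] []] []]; case: v => [[[] []] []]. Qed.

Lemma badF_E s t : badF s t = badL s t.
Proof.
rewrite /badF /badL; cbv zeta.
have Es : (fun e => (nth (v0, v0) [seq (s e, t e) | e <- El] (code e)).1) = s.
  by apply: functional_extensionality => e; rewrite codeP.
have Et : (fun e => (nth (v0, v0) [seq (s e, t e) | e <- El] (code e)).2) = t.
  by apply: functional_extensionality => e; rewrite codeP.
rewrite Es Et; congr badG.
apply: functional_extensionality => u; apply: functional_extensionality => v.
exact: vcodeP.
Qed.

Lemma qsE e : @gsrc Q3 e = qs e. Proof. exact: cvE. Qed.
Lemma qtE e : @gtgt Q3 e = qt e. Proof. exact: cvE. Qed.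

Lemma Q1 e : qs e <> qt e.
Proof. by move/allP: q1T => /(_ e (memEl e)) /eqVfP. Qed.

Lemma Q2 e e' : samep (qs e, qt e) (qs e', qt e') -> e = e'.
Proof.
move/allP: q2T => /(_ e (memEl e)) /allP /(_ e' (memEl e')) /implyP H /H.
by rewrite eqEfE => /eqP.
Qed.

Lemma Q3t e w : w <> qs e -> w <> qt e -> adjL qs qt (qs e) w -> adjL qs qt (qt e) w -> False.
Proof.
move=> n1 n2 a1 a2.
move/allP: q3T => /(_ e (memEl e)) /allP /(_ w (memVl w)).
have -> : ~~ eqVf w (qs e) by apply/eqVfP.
have -> : ~~ eqVf w (qt e) by apply/eqVfP.
by rewrite a1 a2.
Qed.

Lemma iso_bad (s t : E -> V) : graph_iso (@Graph (gV Q3) (gE Q3) s t) Q3 -> badL s t -> False.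
Proof.
move=> [f [g [[f' ff' f'f] [[g' gg' g'g] Hc]]]].
have fi : injective f := can_inj ff'.
have gi : injective g := can_inj gg'.
have Hg : forall e, samep (qs (g e), qt (g e)) (f (s e), f (t e)).
  move=> e; apply/samepP; rewrite -qsE -qtE.
  by case: (Hc e) => /= [[-> ->]|[-> ->]]; auto.
have Hadj : forall u w, adjL s t u w -> adjL qs qt (f u) (f w).
  move=> u w /hasP [e _ he]; apply/hasP; exists (g e); first exact: memEl.
  exact: samep_trans (Hg e) (samep_map f he).
rewrite /badL /badG => /or3P [].
- move=> /hasP [e _ /eqVfP he].
  move: (Hg e); rewrite he => /samepP /= [[E1 E2]|[E1 E2]]; apply: (Q1 (e := g e)); by rewrite E1 E2.
- move=> /hasP [e _ /hasP [e' _ /andP [ne he]]].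
  have H1 : samep (qs (g e), qt (g e)) (qs (g e'), qt (g e')).
    apply: samep_trans (Hg e) _; apply: samep_trans (samep_map f he) _.
    exact: samep_sym (Hg e').
  move: ne; rewrite eqEfE => /eqP; apply; apply: gi; exact: Q2.
- move=> /hasP [e _ /hasP [w _ /and4P [n1 n2 a1 a2]]].
  have m1 : f w <> f (s e) by move=> /fi /eqVfP; apply/negP.
  have m2 : f w <> f (t e) by move=> /fi /eqVfP; apply/negP.
  move: (Hadj _ _ a1) (Hadj _ _ a2) => b1 b2.
  move: (Hg e) => /samepP /= [[E1 E2]|[E1 E2]].
  + apply: (Q3t (e := g e) (w := f w)); rewrite ?E1 ?E2 //.
  + apply: (Q3t (e := g e) (w := f w)); rewrite ?E1 ?E2 //.
Qed.

Definition G' (h k : HE) : graph := @Graph (gV Q3) (gE Q3) (swS h k) (swT h k).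

Lemma swE h k x : sw h k x = if x == h then k else if x == k then h else x.
Proof. by rewrite /sw !eqHfE. Qed.

Lemma swK h k : involutive (sw h k).
Proof.
move=> x; rewrite !swE.
case: (x =P h) => [->|xh].
  rewrite eqxx; case: (k =P h) => [->|kh] //.
case: (x =P k) => [->|xk]; first by rewrite eqxx.
by rewrite (introF eqP xh) (introF eqP xk).
Qed.

Lemma lam_sw (T : Type) (lam : HE -> T) h k x : lam h = lam k -> lam (sw h k x) = lam x.
Proof.
move=> hk; rewrite swE.
case: (x =P h) => [->|xh]; first by rewrite hk.
by case: (x =P k) => [->|xk].
Qed.

Lemma tile_swap (S : eqType) (lam : HE -> cet S) h k v :
  lam h = lam k -> perm_eq (@tile_at S (G' h k) lam v) (@tile_at S Q3 lam v).
Proof.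
move=> hk; rewrite /tile_at.
have -> : [seq x <- enum {: gE (G' h k) * bool} | @hend (G' h k) x == v] =
          filter (preim (sw h k) (fun y => @hend Q3 y == v)) (enum {: gE Q3 * bool}).
  apply: eq_filter => x /=; rewrite hendE.
  by case: x => e [].
have -> : [seq lam x | x <- filter (preim (sw h k) (fun y => @hend Q3 y == v)) (enum {: gE Q3 * bool})]
  = [seq lam x | x <- [seq sw h k y | y <- filter (preim (sw h k) (fun y => @hend Q3 y == v)) (enum {: gE Q3 * bool})]].
  by rewrite -map_comp; apply: eq_map => x /=; rewrite (lam_sw _ hk).
rewrite -filter_map; apply: perm_map; apply: perm_filter.
apply: uniq_perm.
- by rewrite (map_inj_uniq (can_inj (swK h k))) enum_uniq.
- exact: enum_uniq.
- move=> x; rewrite mem_enum; apply/mapP; exists (sw h k x); first by rewrite mem_enum.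
  by rewrite swK.
Qed.

Lemma G'_iso (S : eqType) (P : seq (tile S)) (lam : HE -> cet S) h k :
  scenario3 P Q3 -> assembly_design (H:=Q3) lam -> tiles_in (H:=Q3) lam P -> lam h = lam k ->
  graph_iso (G' h k) Q3.
Proof.
move=> [_ [_ H3]] des tin hk; apply: H3 => //.
- by apply/card_gt0P; exists v0.
- exists lam; split; first exact: des.
  move=> v; move: (tin v); rewrite /in_tiles => /hasP [u uP pu].
  apply/hasP; exists u => //; rewrite /tile_eq.
  exact: perm_trans (tile_swap v hk) pu.
Qed.

Lemma swapK (S : eqType) (P : seq (tile S)) (lam : HE -> cet S) h k :
  scenario3 P Q3 -> assembly_design (H:=Q3) lam -> tiles_in (H:=Q3) lam P -> lam h = lam k ->
  badS h k -> False.
Proof.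
move=> sc des tin hk; rewrite /badS badF_E; apply: iso_bad.
exact: (G'_iso sc des tin hk).
Qed.

Lemma tileL (S : eqType) (lam : HE -> cet S) v : perm_eq (@tile_at S Q3 lam v) (map lam (hsL v)).
Proof.
rewrite /tile_at /hsL; apply: perm_map.
have -> : [seq x <- enum {: gE Q3 * bool} | @hend Q3 x == v] =
          [seq x <- enum {: gE Q3 * bool} | eqVf (hendF x) v].
  by apply: eq_filter => x; rewrite eqVfE hendE.
apply: perm_filter; apply: uniq_perm (enum_uniq _) heT _.
by move=> x; rewrite mem_enum memHEl.
Qed.

Lemma memhs v h : (h \in hsL v) = (hendF h == v).
Proof. by rewrite mem_filter memHEl andbT eqVfE. Qed.

Lemma hsL_uniq v : uniq (hsL v).
Proof. exact: filter_uniq heT. Qed.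

Lemma hatK (S : eqType) (x : cet S) : hat (hat x) = x.
Proof. by case: x => a b; rewrite /hat /= negbK. Qed.

Lemma hat_neq (S : eqType) (x : cet S) : hat x != x.
Proof. by case: x => a b; rewrite /hat /= xpair_eqE eqxx /=; case: b. Qed.

Lemma lam_partner (S : eqType) (lam : HE -> cet S) :
  assembly_design (H:=Q3) lam -> forall h, lam (partner h) = hat (lam h).
Proof.
move=> des [e []]; rewrite /partner /=.
- by rewrite (des e) hatK.
- exact: des.
Qed.

Lemma pairsOf_mem (T : eqType) (s : seq T) x y :
  x \in s -> y \in s -> x != y -> (x, y) \in pairsOf s \/ (y, x) \in pairsOf s.
Proof.
elim: s => // a s IH; rewrite !inE /= => /orP [/eqP ->|xs] /orP [/eqP ->|ys] nxy.
- by rewrite eqxx in nxy.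
- by left; rewrite mem_cat; apply/orP; left; apply/mapP; exists y.
- by right; rewrite mem_cat; apply/orP; left; apply/mapP; exists x.
- by case: (IH xs ys nxy) => H; [left|right]; rewrite mem_cat H orbT.
Qed.

Lemma count2 (T : eqType) (p : pred T) s x y :
  uniq s -> x \in s -> y \in s -> x != y -> p x -> p y -> 1 < count p s.
Proof.
move=> us xs ys nxy px py; rewrite -size_filter.
have u2 : uniq [:: x; y] by rewrite /= inE nxy.
have sub : {subset [:: x; y] <= filter p s}.
  by move=> z; rewrite !inE mem_filter => /orP [] /eqP ->; apply/andP.
exact: (uniq_leq_size u2 sub).
Qed.

Lemma count2E (T : eqType) (p : pred T) s :
  uniq s -> 1 < count p s -> exists x y, [/\ x \in s, y \in s, x != y, p x & p y].
Proof.
move=> us; rewrite -size_filter.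
have uf := filter_uniq p us.
case E: (filter p s) uf => [|x [|y r]] //= uf _.
have hx : x \in filter p s by rewrite E inE eqxx.
have hy : y \in filter p s by rewrite E !inE eqxx orbT.
move: hx hy; rewrite !mem_filter => /andP [px xs] /andP [py ys].
exists x, y; split => //.
by move: uf; rewrite inE negb_or => /andP [/andP [] ].
Qed.

Unset Implicit Arguments.
Set Strict Implicit.
Set Printing Implicit Defensive.

Theorem lemma4 (S : eqType) (P : seq (tile S)) (lam : gE Q3 * bool -> cet S)
  (t : tile S) (vi vj : gV Q3) :
  is_pot P -> scenario3 P Q3 ->
  assembly_design lam -> tiles_in lam P ->
  in_tiles t P ->
  vi != vj -> tile_eq (tile_at lam vi) t -> tile_eq (tile_at lam vj) t ->
  exists a b c : cet S,
    [/\ tile_eq t [:: a; b; c],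
        bond_type a != bond_type b,
        bond_type a != bond_type c &
        bond_type b != bond_type c].
Proof.
move=> pot sc des tin tinP nij ti tj.
have Pi : perm_eq (map lam (hsL vi)) t.
  by apply: (perm_trans _ ti); rewrite perm_sym; exact: tileL.
have Pj : perm_eq (map lam (hsL vj)) t.
  by apply: (perm_trans _ tj); rewrite perm_sym; exact: tileL.
have Pij : perm_eq (map lam (hsL vi)) (map lam (hsL vj)).
  by apply: (perm_trans Pi); rewrite perm_sym.
have sK := fun h k => @swapK S P lam h k sc des tin.
have loopc : forall h1 h2, h1 \in hsL vi -> h2 \in hsL vi -> lam h2 = hat (lam h1) -> False.
  move=> h1 h2 m1 m2 e12.
  have n12 : ~~ eqHf h1 h2.
    rewrite eqHfE; apply/eqP => E; move: e12; rewrite E => /esym/eqP.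
    by rewrite (negbTE (hat_neq _)).
  move/allP: loopT => /(_ vi (memVl vi)) /allP /(_ h1 m1) /allP /(_ h2 m2) /implyP /(_ n12) b.
  apply: (sK _ _ _ b); by rewrite lam_partner // e12.
have nadj : all (fun h => ~~ eqVf (hendF (partner h)) vj) (hsL vi).
  apply/allP => h hin; apply/negP => /eqVfP he.
  have pin : partner h \in hsL vj by rewrite memhs he.
  have : lam (partner h) \in map lam (hsL vi) by rewrite (perm_mem Pij) map_f.
  move=> /mapP [h' h'in E'].
  by apply: (loopc h h' hin h'in); rewrite -E' lam_partner.
have eqc : forall h h', h \in hsL vi -> h' \in hsL vi -> h != h' -> lam h = lam h' -> False.
  move=> h h' m m' nh e.
  have c2 : 1 < count (pred1 (lam h)) (map lam (hsL vi)).
    rewrite count_map; apply: (count2 (hsL_uniq vi) m m' nh) => /=; by rewrite ?e eqxx.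
  move: c2; rewrite (permP Pij) count_map => /(count2E (hsL_uniq vj)).
  move=> [k [k' [km k'm nk /eqP ek /eqP ek']]].
  have cv := allP (allP coreT vi (memVl vi)) vj (memVl vj).
  have nv : ~~ eqVf vi vj by rewrite eqVfE.
  move: cv; rewrite /corev nv nadj /= => /allP cv.
  have [ph|ph] := pairsOf_mem m m' nh; have [pk|pk] := pairsOf_mem km k'm nk;
   move: (allP (cv _ ph) _ pk) => /= /or4P [] b; apply: (sK _ _ _ b); congruence.
have dist : forall h h', h \in hsL vi -> h' \in hsL vi -> h != h' ->
    bond_type (lam h) != bond_type (lam h').
  move=> h h' m m' nh; apply/negP => /eqP.
  rewrite /bond_type; case E1: (lam h) => [a b]; case E2: (lam h') => [a' b'] /= ea.
  subst a'.
  case: (eqVneq b b') => [eb|nb].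
  - by apply: (eqc h h' m m' nh); rewrite E1 E2 eb.
  - apply: (loopc h h' m m'); rewrite E1 E2 /hat /=; congr pair.
    by move: nb; clear E1 E2; case: b; case: b'.
have sz : size (hsL vi) = 3 by move/allP: sizeT => /(_ vi (memVl vi)) /eqP.
have u := hsL_uniq vi.
have mi : forall h, h \in hsL vi -> h \in hsL vi by [].
case E: (hsL vi) sz u mi => [|h1 [|h2 [|h3 [|? ?]]]] //= _ u mi.
have m1 : h1 \in hsL vi by rewrite E inE eqxx.
have m2 : h2 \in hsL vi by rewrite E !inE eqxx orbT.
have m3 : h3 \in hsL vi by rewrite E !inE eqxx !orbT.
move: u; rewrite !inE !negb_or => /and3P [/andP [n12 n13] n23 _].
exists (lam h1), (lam h2), (lam h3); split.
- by rewrite /tile_eq perm_sym; move: Pi; rewrite E.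
- exact: dist.
- exact: dist.
- exact: dist.
Qed.
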